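(* Let $G=(V,E)$ be a graph with edges ordered $e_1,\dots,e_m$ that has an $f$-MFD blocking set $\{(e_i,F_i)\}_{i=1}^m$. Then for every $S\subseteq V$, the induced subgraph $G[S]$, with its edges ordered as inherited from the ordering of $E$, has $$\Big\{\Big(e_i,\ (F_i\cap V\cap S)\cup\big(F_i\cap E\cap \tbinom{S}{2}\big)\Big)\Big\}_{e_i\in E(G[S])}$$ as an $f$-MFD blocking set.
   Context: For a graph $G=(V,E)$ and $F\subseteq V\cup E$, $G-F$ is obtained by deleting the vertices of $F\cap V$ (with incident edges) and the edges of $F\cap E$. $F$ damages an edge $e$ if $e$ is not an edge of $G-F$. For $v\in V$ let $\deg_G(v,F)=|\{u\in N_G(v): u\in F\text{ or }\{u,v\}\in F\}|$ and $\deg_G(F)=\max_{v\in V\setminus F}\deg_G(v,F)$. Given ordered edges $e_1,\dots,e_m$ with $e_i=\{u_i,v_i\}$, let $G_{<i}=(V,\{e_1,\dots,e_{i-1}\})$. A connectivity blocking set for $G$ is a collection $\{(e_i,F_i)\}_{i=1}^m$ with $F_i\subseteq V\cup E$ such that (1) $F_i$ does not damage $e_i$ and (2) $u_i,v_i$ are disconnected in $G_{<i}-F_i$. It is an $f$-MFD blocking set if moreover $\deg_G(F_i)\le f$ for all $i$. For the induced subgraph these notions are taken with respect to $G[S]$ and its inherited edge order. *)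

(* Defs.v *)
From mathcomp Require Import all_boot.
Set Implicit Arguments. Unset Strict Implicit. Unset Printing Implicit Defensive.

(* A graph with an ordered edge list: vertex set gV, edges e_1..e_m listed in
   order in gE; an edge is a 2-element vertex set {u,v}. *)
Record graph (T : finType) := Graph { gV : {set T}; gE : seq {set T} }.

Section Defs.
Variable T : finType.
Implicit Types (G : graph T).

Definition simple_graph G : bool :=
  uniq (gE G) && all (fun e : {set T} => (#|e| == 2) && (e \subset gV G)) (gE G).

Definition edge_set G : {set {set T}} := [set e in gE G].

(* F ⊆ V ∪ E, represented as (F ∩ V, F ∩ E) *)
Definition fault := ({set T} * {set {set T}})%type.

Definition fault_in G (F : fault) : bool :=
  (F.1 \subset gV G) && (F.2 \subset edge_set G).

Definition gdel G (F : fault) : graph T :=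
  Graph (gV G :\: F.1) [seq e <- gE G | (e \notin F.2) && [disjoint e & F.1]].

Definition damages G (F : fault) (e : {set T}) : bool := e \notin gE (gdel G F).

(* G_{<i} for the (0-based) i-th edge: keeps the edges before it *)
Definition gprefix G (i : nat) : graph T := Graph (gV G) (take i (gE G)).

Definition gadj G : rel T :=
  fun x y => [&& x \in gV G, y \in gV G & [set x; y] \in gE G].

Definition gconnected G (u v : T) : bool := connect (gadj G) u v.

Definition nbhd G (v : T) : {set T} := [set u | [set u; v] \in gE G].

Definition degvF G (v : T) (F : fault) : nat :=
  #|[set u in nbhd G v | (u \in F.1) || ([set u; v] \in F.2)]|.

Definition degF G (F : fault) : nat := \max_(v in gV G :\: F.1) degvF G v F.

(* connectivity blocking set, indexed by the edges: B e = F_i for e = e_i *)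
Definition conn_blocking G (B : {set T} -> fault) : Prop :=
  forall i, i < size (gE G) ->
    let e := nth set0 (gE G) i in
    [/\ fault_in G (B e), ~~ damages G (B e) e &
        forall u v, e = [set u; v] ->
          ~~ gconnected (gdel (gprefix G i) (B e)) u v].

Definition mfd_blocking G (f : nat) (B : {set T} -> fault) : Prop :=
  conn_blocking G B /\ (forall e, e \in gE G -> degF G (B e) <= f).

Definition induced G (S : {set T}) : graph T :=
  Graph S [seq e <- gE G | (e : {set T}) \subset S].

Definition restrict_fault G (S : {set T}) (F : fault) : fault :=
  (F.1 :&: gV G :&: S,
   F.2 :&: edge_set G :&: [set e : {set T} | (e \subset S) && (#|e| == 2)]).

End Defs.

(* Main.v *)
Require Import Defs.
From mathcomp Require Import all_boot.

Lemma take_filter_sub (X : eqType) (p : pred X) (x0 : X) s i :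
  uniq s -> i < size (filter p s) ->
  {subset take i (filter p s) <= take (index (nth x0 (filter p s) i) s) s}.
Proof.
elim: s i => [|a s IH] i //= /andP[an us].
have key : forall k, k < size (filter p s) ->
    a != nth x0 (filter p s) k.
  move=> k lk; apply/eqP => ea; move: an; rewrite ea.
  by have := mem_nth x0 lk; rewrite mem_filter => /andP[_ ->].
case: (p a) => /=.
- case: i => [|i] //= ltis y.
  rewrite (negbTE (key _ ltis)) /= !inE => /orP[->//|/(IH _ us ltis) ->].
  by rewrite orbT.
- move=> ltis y yin.
  rewrite (negbTE (key _ ltis)) /= !inE.
  by rewrite (IH _ us ltis _ yin) orbT.
Qed.

Theorem mainTheorem3 (T : finType) (G : graph T) (f : nat)
    (B : {set T} -> fault T) :
  simple_graph G -> mfd_blocking G f B ->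
  forall S : {set T}, S \subset gV G ->
    mfd_blocking (induced G S) f (fun e => restrict_fault G S (B e)).
Proof.
move=> /andP[uE allE] [conn degs] S sSV; split.
- move=> i lti e.
  have eS : e \in gE (induced G S) by apply: mem_nth.
  move: (eS); rewrite /induced /= mem_filter => /andP[eSub eG].
  set j := index e (gE G).
  have ltj : j < size (gE G) by rewrite index_mem.
  have nj : nth set0 (gE G) j = e by apply: nth_index.
  have := conn j ltj; rewrite /= nj => -[fin nd ncon].
  split.
  + apply/andP; split; first exact: subsetIr.
    apply/subsetP => x; rewrite /edge_set /= !inE mem_filter.
    by case/andP => /andP[_ ->] /andP[-> _].
  + move: nd; rewrite /damages /= !negbK !mem_filter eSub eG !andbT.
    case/andP=> nF2 dis; apply/andP; split.
      by rewrite !inE (negbTE nF2).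
    apply: disjointWr dis; rewrite -setIA; exact: subsetIl.
  + move=> u v euv; apply/negP => con; move: (ncon u v euv) => /negP; apply.
    move: con; rewrite /gconnected; apply: connect_sub => x y.
    case/and3P => xV yV xyE; apply: connect1.
    have hV : forall z, z \in S :\: (B e).1 :&: gV G :&: S -> z \in gV G :\: (B e).1.
      move=> z; rewrite !inE => /andP[zn zS].
      have zV : z \in gV G by apply: (subsetP sSV).
      by move: zn; rewrite zV zS !andbT => ->.
    have xV' := hV _ xV; have yV' := hV _ yV.
    rewrite /gadj /= xV' yV' /=.
    move: xyE; rewrite /= !mem_filter => /andP[/andP[nF2' _] tk].
    have tk' := @take_filter_sub _ _ set0 _ _ uE lti _ tk.
    have xyG : [set x; y] \in gE G by apply: mem_take tk'.
    have xyS : [set x; y] \subset S.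
      by move: (mem_take tk); rewrite mem_filter => /andP[].
    rewrite tk' andbT; apply/andP; split.
      apply/negP => inF; move: nF2'; rewrite !inE inF xyS xyG /=.
      by move/allP: allE => /(_ _ xyG) /andP[-> _].
    rewrite disjoints_subset; apply/subsetP => z; rewrite !inE => /orP[] /eqP ->.
      by move: xV'; rewrite !inE => /andP[].
    by move: yV'; rewrite !inE => /andP[].
- move=> e; rewrite /induced /= mem_filter => /andP[eSub eG].
  apply: leq_trans (degs e eG).
  rewrite /degF; apply/bigmax_leqP => v vin.
  have vin' : v \in gV G :\: (B e).1.
    move: vin; rewrite !inE => /andP[vn vS].
    have vV : v \in gV G by apply: (subsetP sSV).
    by move: vn; rewrite vV vS !andbT => ->.
  apply: leq_trans (leq_bigmax_cond _ vin').
  rewrite /degvF; apply: subset_leq_card; apply/subsetP => u; rewrite !inE.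
  rewrite /nbhd /= mem_filter.
  case/andP => /andP[_ ->] /orP[/andP[/andP[-> _] _]//|/and3P[/andP[-> _] _ _]].
  by rewrite orbT.
Qed.
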